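(* Any GET operation by client $c$ on a key $k$ of partition $p$ in which the client sends $hrv = hrm[:,p]$ (its current row for partition $p$ of the highest-read matrix) satisfies per-key monotonic-read consistency: if the operation is issued at time $t$ and served by server $s$, which reads the value of $k$ at time $t'$, then every $w\in ClientReads(c,k,t)$ is included in $CommittedWrites(s,k,t')$.
   Context: System model. Data is replicated in $D$ datacenters and split into $P$ partitions. In each datacenter $d$, each partition is replicated by a Raft group with a leader $L_d$; Raft guarantees that all members of a group commit the same totally ordered sequence of log entries, each with a log index, in increasing index order. Every version $v$ of a key carries a value, an originating datacenter $v.dc\_id$, the log index $idx(v)$ it received in the Raft log of its originating datacenter, and a hybrid logical clock (HLC) timestamp $v.t=\langle l,c\rangle$; HLC timestamps are compared lexicographically. Writes committed in the group of datacenter $d$ that originated at $d$ are forwarded, in commit order, over FIFO channels to the leaders of the same partition in every other datacenter, which append them (carrying their original index $idx(v)$) to their own Raft logs. Each server $s$ keeps a vector $sv$ of length $D$, initially zero; when $s$ commits a version $v$ it sets $sv[v.dc\_id]:=idx(v)$ and adds $v$ to the version chain of its key. Client protocol. Each client $c$ keeps $D\times P$ matrices $hrm$ (highest read) and $hwm$ (highest write), initially zero, and HLC timestamps $dt_r,dt_w$, initially zero. GET of key $k$ in partition $p$: the client sends vectors $hrv,hwv$ of length $D$ (each either the zero vector or $hrm[:,p]$, resp. $hwm[:,p]$); the server blocks while there is $i$ with $sv[i]<hrv[i]$ or $sv[i]<hwv[i]$; it then returns the version $v$ of $k$ in its version chain with the largest timestamp, together with $v.dc\_id$, $sv[v.dc\_id]$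 and $v.t$; the client sets $hrm[v.dc\_id,p]:=\max(hrm[v.dc\_id,p],sv[v.dc\_id])$ and $dt_r:=\max(dt_r,v.t)$. PUT of key $k$ in partition $p$ at leader $L_d$: the client sends a dependency timestamp $dt$ (one of $0$, $dt_r$, $dt_w$, $\max(dt_r,dt_w)$); the leader updates its HLC $\langle l,c\rangle$ with $dt$ by the rule: $l':=l$; $l:=\max(l',pt,dt.l)$ where $pt$ is its physical clock; then $c:=\max(c,dt.c)+1$ if $l=l'=dt.l$, else $c:=c+1$ if $l=l'$, else $c:=dt.c+1$ if $l=dt.l$, else $c:=0$; it timestamps the new version with the updated HLC value $t$ and $dc\_id=d$, appends it to the Raft log, and after commit replies with $d$, $sv[d]$ and $t$; the client sets $hwm[d,p]:=\max(hwm[d,p],sv[d])$ and $dt_w:=\max(dt_w,t)$. Definitions. $CommittedWrites(s,k,t)$ is the ordered sequence of all writes of key $k$ committed at server $s$ by time $t$; $ClientWrites(c,k,t)$ is the ordered sequence of all writes of $k$ done by client $c$ by time $t$; $ClientReads(c,k,t)$ is the set of writes whose value of $k$ has been read by client $c$ by time $t$. *)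

(* Defs.v *)
From mathcomp Require Import all_boot.
Set Implicit Arguments. Unset Strict Implicit. Unset Printing Implicit Defensive.

(* Hybrid logical clock timestamps <l,c>, compared lexicographically. *)
Definition HLC := (nat * nat)%type.
Definition hlc_le (a b : HLC) : bool := (a.1 < b.1) || ((a.1 == b.1) && (a.2 <= b.2)).
Definition hlc_max (a b : HLC) : HLC := if hlc_le a b then b else a.

(* Dependency-timestamp choices a client may send with a PUT. *)
Inductive DtChoice := DtZero | DtR | DtW | DtMax.

Section Model.
(* D datacenters ('I_D), P partitions ('I_P), keys K, values Val, servers S. *)
Variables (D P : nat) (K Val : eqType) (S : Type).

(* A version: (key, value, originating datacenter dc_id, log index idx, HLC t). *)
Definition Version := (K * Val * 'I_D * nat * HLC)%type.
Definition vkey (v : Version) : K := v.1.1.1.1.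
Definition vval (v : Version) : Val := v.1.1.1.2.
Definition vdc (v : Version) : 'I_D := v.1.1.2.
Definition vidx (v : Version) : nat := v.1.2.
Definition vts (v : Version) : HLC := v.2.

(* part k : partition of key k; sdc s / spart s : the Raft group (datacenter,
   partition) server s belongs to; committed s t : the totally ordered sequence
   of log entries (versions) committed at server s by (global) time t. *)
Variables (part : K -> 'I_P) (sdc : S -> 'I_D) (spart : S -> 'I_P)
          (committed : S -> nat -> seq Version).

(* The version vector sv of a server whose committed sequence is l:
   initially 0, and committing v sets sv[v.dc_id] := idx(v). *)
Definition svec (l : seq Version) (i : 'I_D) : nat :=
  foldl (fun n v => if vdc v == i then vidx v else n) 0 l.

Definition from_dc (d : 'I_D) (v : Version) : bool := vdc v == d.

(* CommittedWrites(s,k,t): the ordered sequence of writes of k committed at s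
   by time t (this is also the version chain of k at s at time t). *)
Definition CommittedWrites (s : S) (k : K) (t : nat) : seq Version :=
  [seq v <- committed s t | vkey v == k].

Definition system_model : Prop :=
  [/\
      (forall s t1 t2, t1 <= t2 -> prefix (committed s t1) (committed s t2)),
      (* Raft: all members of a group commit the same totally ordered sequence *)
      (forall s1 s2 t1 t2, sdc s1 = sdc s2 -> spart s1 = spart s2 ->
         prefix (committed s1 t1) (committed s2 t2) \/
         prefix (committed s2 t2) (committed s1 t1)),
      (forall s t v, v \in committed s t -> part (vkey v) = spart s),
      (* writes originating at the group's datacenter carry their (1-based)
         Raft log index in that group's log *)
      (forall s t l1 v l2, committed s t = l1 ++ v :: l2 ->
         vdc v = sdc s -> vidx v = (size l1).+1) &
      (* writes originating at d are forwarded in commit order over FIFO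
         channels (keeping their original index): at a server of datacenter
         <> d, the writes originating at d form a prefix of the writes
         originating at d committed by the group of d of the same partition *)
      (forall s t d, d != sdc s -> exists s' t',
         [/\ sdc s' = d, spart s' = spart s &
             prefix [seq v <- committed s t | from_dc d v]
                    [seq v <- committed s' t' | from_dc d v]])].

Record GetOp := MkGet {
  g_key : K;
  g_hrv : bool;          (* true: hrv = hrm[:,p]; false: hrv = 0 *)
  g_hwv : bool;          (* true: hwv = hwm[:,p]; false: hwv = 0 *)
  g_issue : nat;
  g_srv : S;
  g_read : nat;          (* time the server reads the value of k *)
  g_resp : nat;
  g_ret : option Version;(* returned version (None if no version of k yet) *)
  g_retsv : nat          (* returned sv[v.dc_id] *)
}.

Record PutOp := MkPut {
  p_key : K;
  p_val : Val;
  p_dt : DtChoice;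
  p_issue : nat;
  p_srv : S;             (* the leader L_d of the group serving the PUT *)
  p_resp : nat;
  p_ver : Version;       (* the new version (returned d = dc_id, t = ts) *)
  p_retsv : nat          (* returned sv[d] *)
}.

Inductive Op := OGet of GetOp | OPut of PutOp.

Definition op_issue (o : Op) : nat :=
  match o with OGet g => g_issue g | OPut q => p_issue q end.
Definition op_resp (o : Op) : nat :=
  match o with OGet g => g_resp g | OPut q => p_resp q end.

Record CState := MkCState {
  hrm : 'I_D -> 'I_P -> nat;
  hwm : 'I_D -> 'I_P -> nat;
  dt_r : HLC;
  dt_w : HLC
}.

Definition cstate0 : CState :=
  MkCState (fun _ _ => 0) (fun _ _ => 0) (0, 0) (0, 0).

Definition bump (m : 'I_D -> 'I_P -> nat) (d : 'I_D) (p : 'I_P) (n : nat) :=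
  fun i j => if (i == d) && (j == p) then maxn (m i j) n else m i j.

Definition cstep (st : CState) (o : Op) : CState :=
  match o with
  | OGet g =>
      match g_ret g with
      | Some v => MkCState (bump (hrm st) (vdc v) (part (g_key g)) (g_retsv g))
                           (hwm st) (hlc_max (dt_r st) (vts v)) (dt_w st)
      | None => st
      end
  | OPut q => MkCState (hrm st)
                       (bump (hwm st) (vdc (p_ver q)) (part (p_key q)) (p_retsv q))
                       (dt_r st) (hlc_max (dt_w st) (vts (p_ver q)))
  end.

Definition client_state (h : seq Op) : CState := foldl cstep cstate0 h.

Definition valid_get (st : CState) (g : GetOp) : Prop :=
  let k := g_key g in let p := part k in let s := g_srv g in
  let sv := svec (committed s (g_read g)) in
  let chain := CommittedWrites s k (g_read g) in
  [/\ spart s = p,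
      (g_issue g <= g_read g <= g_resp g) /\ (g_issue g < g_resp g),
      (* the server no longer blocks at read time *)
      (forall i, ((if g_hrv g then hrm st i p else 0) <= sv i) /\
                 ((if g_hwv g then hwm st i p else 0) <= sv i)),
      (if chain is [::] then g_ret g = None else
         exists2 v, g_ret g = Some v &
           v \in chain /\ forall u, u \in chain -> hlc_le (vts u) (vts v)) &
      (forall v, g_ret g = Some v -> g_retsv g = sv (vdc v))].

Definition valid_put (st : CState) (q : PutOp) : Prop :=
  let s := p_srv q in let v := p_ver q in
  [/\ spart s = part (p_key q), p_issue q < p_resp q,
      [/\ vkey v = p_key q, vval v = p_val q & vdc v = sdc s],
      v \in committed s (p_resp q) &
      p_retsv q = svec (committed s (p_resp q)) (sdc s)].

Definition valid_op (st : CState) (o : Op) : Prop :=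
  match o with OGet g => valid_get st g | OPut q => valid_put st q end.

Definition valid_history (h : seq Op) : Prop :=
  (forall pre o post, h = pre ++ o :: post -> valid_op (client_state pre) o) /\
  (forall pre o1 o2 post, h = pre ++ o1 :: o2 :: post -> op_resp o1 <= op_issue o2).

Definition ClientReads (h : seq Op) (k : K) (t : nat) (w : Version) : bool :=
  has (fun o => match o with
                | OGet g => (g_key g == k) && (g_resp g <= t) && (g_ret g == Some w)
                | OPut _ => false
                end) h.

End Model.

(* Main.v *)
Require Import Defs.
From mathcomp Require Import all_boot.
From mathcomp Require Import zify.
Set Implicit Arguments. Unset Strict Implicit.

Section Aux.
Variables (D : nat) (K Val : eqType).
Local Notation V := (Version D K Val).

Lemma svec_last (d : 'I_D) (l : seq V) n0 :
  foldl (fun n v => if vdc v == d then vidx v else n) n0 l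
  = last n0 (map (@vidx D K Val) (filter (from_dc d) l)).
Proof.
elim: l n0 => [|v l IH] n0 //=; rewrite /from_dc; case: eqP => _ /=; exact: IH.
Qed.

Lemma path_group (d : 'I_D) (l : seq V) m :
  (forall l1 v l2, l = l1 ++ v :: l2 -> from_dc d v -> vidx v = m + size l1 + 1) ->
  forall m', m' <= m -> path ltn m' (map (@vidx D K Val) (filter (from_dc d) l)).
Proof.
elim: l m => [|v l IH] m H m' Hm' //=.
have H' : forall l1 v' l2, l = l1 ++ v' :: l2 -> from_dc d v' ->
    vidx v' = m.+1 + size l1 + 1.
  move=> l1 v' l2 E Hv; rewrite (H (v :: l1) v' l2) /=; [lia| by rewrite E | by []].
case Hv: (from_dc d v) => /=.
  have -> : vidx v = m + 1 by rewrite (H [::] v l) //= addn0.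
  apply/andP; split; first lia.
  by apply: (IH m.+1 H'); lia.
by apply: (IH m.+1 H'); lia.
Qed.

Lemma last_take (M : seq nat) n : n <= size M ->
  last 0 (take n M) = nth 0 (0 :: M) n.
Proof.
move=> Hn; rewrite (last_nth 0) size_take.
have -> : (if n < size M then n else size M) = n by case: ltnP => //; lia.
by case: n Hn => [|n] Hn //=; rewrite nth_take.
Qed.

Lemma key_prefix (G A B : seq V) :
  prefix A G -> prefix B G -> sorted ltn (0 :: map (@vidx D K Val) G) ->
  last 0 (map (@vidx D K Val) A) <= last 0 (map (@vidx D K Val) B) ->
  prefix A B.
Proof.
move=> HA HB Hs Hle.
have sA := size_prefix HA; have sB := size_prefix HB.
move: HA HB; rewrite !prefixE => /eqP EA /eqP EB.
move: Hle; rewrite -EA -EB !map_take !last_take ?size_map //.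
case: (leqP (size A) (size B)) => Hab Hle.
  by rewrite EA take_takel // EA.
have := @sorted_ltn_nth _ ltn ltn_trans 0 _ Hs (size B) (size A).
rewrite !inE /= size_map !ltnS => /(_ sB sA Hab) Hlt.
by move: Hle; rewrite leqNgt Hlt.
Qed.

Lemma prefix_filter (a : pred V) (s1 s2 : seq V) :
  prefix s1 s2 -> prefix (filter a s1) (filter a s2).
Proof. by case/prefixP => s ->; rewrite filter_cat prefix_prefix. Qed.

End Aux.

Lemma has_split T (f : pred T) (l : seq T) :
  has f l -> exists l1 x l2, l = l1 ++ x :: l2 /\ f x.
Proof.
elim: l => [|y l IH] //= /orP [H|H]; first by exists [::], y, l.
by case: (IH H) => l1 [x [l2 [-> Hx]]]; exists (y :: l1), x, l2.
Qed.

Lemma chain_lt (D : nat) (K Val : eqType) (S : Type) (l : seq (Op D K Val S)) o :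
  (forall a b l1 l2, o :: l = l1 ++ a :: b :: l2 -> op_resp a <= op_issue b) ->
  (forall l1 x l2, l = l1 ++ x :: l2 -> op_issue x < op_resp x) ->
  forall l1 x l2, l = l1 ++ x :: l2 -> op_resp o <= op_issue x.
Proof.
elim: l o => [|b l IH] o Hc Hi l1 x l2 E; first by case: l1 E.
have Hob : op_resp o <= op_issue b by apply: (Hc o b [::] l).
have Hb : op_issue b < op_resp b by apply: (Hi [::] b l).
case: l1 E => [|y l1] /= [Ey El]; first by subst.
have H : op_resp b <= op_issue x.
  apply: (IH b) El.
  - by move=> a c m1 m2 E; apply: (Hc a c (o :: m1) m2); rewrite E.
  - by move=> m1 z m2 E; apply: (Hi (b :: m1) z m2); rewrite E.
apply: leq_trans Hob _; apply: leq_trans (ltnW Hb) H.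
Qed.

Lemma hrm_mono (D P : nat) (K Val : eqType) (S : Type) (part : K -> 'I_P)
  (l : seq (Op D K Val S)) st i j :
  hrm st i j <= hrm (foldl (cstep part) st l) i j.
Proof.
elim: l st => [|o l IH] st //=; apply: leq_trans (IH _).
case: o => [g|q] //=; case: (g_ret g) => [v|] //=.
rewrite /Defs.bump; case: ifP => _ //; apply: leq_maxl.
Qed.

Lemma group_cover (D P : nat) (K Val : eqType) (S : Type)
  (part : K -> 'I_P) (sdc : S -> 'I_D) (spart : S -> 'I_P)
  (committed : S -> nat -> seq (Version D K Val))
  (Hsys : system_model part sdc spart committed) x t d :
  exists x' t', [/\ sdc x' = d, spart x' = spart x &
    prefix [seq v <- committed x t | from_dc d v] [seq v <- committed x' t' | from_dc d v]].
Proof.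
case: Hsys => _ _ _ _ H5.
case: (eqVneq d (sdc x)) => [->|Hne]; first by exists x, t; split => //; apply: prefix_refl.
by case: (H5 x t d Hne) => x' [t' [? ? ?]]; exists x', t'.
Qed.

Lemma group_sorted (D P : nat) (K Val : eqType) (S : Type)
  (part : K -> 'I_P) (sdc : S -> 'I_D) (spart : S -> 'I_P)
  (committed : S -> nat -> seq (Version D K Val))
  (Hsys : system_model part sdc spart committed) x t d :
  sdc x = d -> sorted ltn (0 :: map (@vidx D K Val) [seq v <- committed x t | from_dc d v]).
Proof.
case: Hsys => _ _ _ H4 _ Hd.
apply: (@path_group D K Val d (committed x t) 0) => // l1 v l2 E Hv.
rewrite (H4 x t l1 v l2 E) ?add0n ?addn1 //.
by rewrite Hd; apply/eqP.
Qed.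

Theorem mainTheorem2 (D P : nat) (K Val : eqType) (S C : Type)
  (part : K -> 'I_P) (sdc : S -> 'I_D) (spart : S -> 'I_P)
  (committed : S -> nat -> seq (Version D K Val))
  (hist : C -> seq (Op D K Val S))
  (Hsys : system_model part sdc spart committed)
  (Hcl : forall c', valid_history part sdc spart committed (hist c'))
  (c : C) (pre post : seq (Op D K Val S)) (g : GetOp D K Val S)
  (Hg : hist c = pre ++ OGet g :: post)
  (Hhrv : g_hrv g = true) :
  forall w, ClientReads (hist c) (g_key g) (g_issue g) w ->
    w \in CommittedWrites committed (g_srv g) (g_key g) (g_read g).
Proof.
move=> w HR.
have [Hv Hc] := Hcl c; rewrite Hg in Hv Hc HR.
have Hir : forall l3 x l4, pre ++ OGet g :: post = l3 ++ x :: l4 ->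
    op_issue x < op_resp x.
  move=> l3 x l4 E; have := Hv l3 x l4 E.
  by case: x {E} => [g'|q] /=; [case=> _ [_ ?] | case=> _ ?].
have Hgv := Hv pre (OGet g) post erefl.
case: Hgv => Hsp [_ Hlt] Hblock _ _.
move: HR; rewrite /ClientReads has_cat /= => /orP [H | /orP [H|H]]; last first.
- case/has_split: H => l1 [o [l2 [E Ho]]].
  have Hch := @chain_lt D K Val S post (OGet g) _ _ l1 o l2 E.
  have Hio : op_issue o < op_resp o.
    by apply: (Hir (pre ++ OGet g :: l1) o l2); rewrite E -catA.
  case: o Ho E Hio Hch => [g0|q] //= /andP [/andP [_ H1] _] E Hio Hch.
  have : (g_issue g < g_issue g)%N.
    apply: leq_trans Hlt _; apply: leq_trans _ H1.
    apply: leq_trans _ (ltnW Hio); apply: Hch.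
    + by move=> a b l3 l4 E'; apply: (Hc (pre ++ l3) a b l4); rewrite E' catA.
    + by move=> l3 x l4 E'; apply: (Hir (pre ++ OGet g :: l3) x l4); rewrite E' -catA.
  by rewrite ltnn.
- by move: H => /andP [/andP [_]]; rewrite leqNgt Hlt.
case/has_split: H => p1 [o [p2 [Ep Ho]]].
case: o Ho Ep => [g0|q] //= /andP [/andP [/eqP Hk _] /eqP Hret] Ep.
have Hv0 := Hv p1 (OGet g0) (p2 ++ OGet g :: post).
rewrite Ep -catA in Hv0; case: (Hv0 erefl) => Hsp0 _ _ Hret0 Hsv0.
set s0 := g_srv g0 in Hsp0 Hret0 Hsv0; set r0 := g_read g0 in Hret0 Hsv0.
set s := g_srv g in Hsp Hblock *; set r := g_read g in Hblock *.
have Hw0 : w \in CommittedWrites committed s0 (g_key g0) r0.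
  move: Hret0; case: (CommittedWrites committed s0 (g_key g0) r0) => [|x l].
    by rewrite Hret.
  by case=> v; rewrite Hret => -[<-] [].
move: Hw0; rewrite mem_filter => /andP [Hkw Hw0].
set d := vdc w.
have Hle : svec (committed s0 r0) d <= svec (committed s r) d.
  rewrite -(Hsv0 w Hret).
  have := proj1 (Hblock d); rewrite Hhrv; apply: leq_trans.
  rewrite Ep /client_state foldl_cat /= Hret -Hk.
  apply: leq_trans (hrm_mono _ _ _ _ _).
  by rewrite /= /Defs.bump !eqxx /=; apply: leq_maxr.
have [x0 [t0 [Hd0 Hp0 Hpre0]]] := group_cover Hsys s0 r0 d.
have [x1 [t1 [Hd1 Hp1 Hpre1]]] := group_cover Hsys s r d.
have Hs0 := group_sorted Hsys t0 Hd0.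
have Hs1 := group_sorted Hsys t1 Hd1.
move: Hle; rewrite /svec !svec_last => Hle.
have HAB : prefix [seq v <- committed s0 r0 | from_dc d v]
                  [seq v <- committed s r | from_dc d v].
  case: Hsys => _ H2 _ _ _.
  have [Hp|Hp] := H2 x0 x1 t0 t1 (etrans Hd0 (esym Hd1))
                   (etrans Hp0 (etrans Hsp0 (etrans (congr1 part Hk) (esym (etrans Hp1 Hsp))))).
  - apply: (key_prefix _ Hpre1 Hs1 Hle).
    exact: (@prefix_trans _ _ _ _ Hpre0 (prefix_filter _ Hp)).
  - apply: (key_prefix Hpre0 _ Hs0 Hle).
    exact: (@prefix_trans _ _ _ _ Hpre1 (prefix_filter _ Hp)).
case/prefixP: HAB => tl E.
have Hw1 : w \in [seq v <- committed s0 r0 | from_dc d v].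
  by rewrite mem_filter /from_dc eqxx Hw0.
have : w \in [seq v <- committed s r | from_dc d v] by rewrite E mem_cat Hw1.
rewrite mem_filter => /andP [_ Hw2].
by rewrite /CommittedWrites mem_filter Hw2 -Hk Hkw.
Qed.
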